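(* If a spherical curve $P$ has a trigon of type A, then $r(P)\le 2$.
   Context: A spherical curve is a smooth immersion $P:S^1\to S^2$ whose self-intersections are finitely many transverse double points, called crossings. It is oriented and has at least one crossing. Regions are the components of $S^2\setminus P(S^1)$, and edges are the arcs of the curve between consecutive crossings. A trigon is a region bounded by three edges. The Gauss word is the cyclic word of crossings met in one traversal of the curve; each crossing appears twice. Crossings $a,b$ are interlaced if their occurrences alternate $a\dots b\dots a\dots b$ in the cyclic word, i.e., their chords cross in the chord diagram. Let a trigon have crossings $x,y,z$. Each of its three edges gives a block of two consecutive letters in the Gauss word, one block on each of $\{x,y\}$, $\{y,z\}$, $\{z,x\}$, so the word has the form $B_1W_1B_2W_2B_3W_3$ with the $W_i$ free of $x,y,z$. The trigon's type is determined by how many of the three pairs among $x,y,z$ are interlaced: type A if exactly two pairs are interlaced; type B if exactly one; type C if all three (e.g. $xy\,W_1\,zx\,W_2\,yz\,W_3$, as in the trefoil curve); type D if none (e.g. $xy\,W_1\,yz\,W_2\,zx\,W_3$). A crossing is reducible if no crossing is interlaced with it; equivalently, only three distinct regions meet at it. $P$ is reducible if it has a reducible crossing. The inverse-half-twisted splice $I$ at a crossing $p$ takes the curve with cyclic Gauss word $p\,A\,p\,B$ to the curve with Gauss word $\overline{A}\,B$, where $\overline{A}$ is $A$ reversed. Geometrically, $p$ is smoothed in the unique way giving a single closed curve, and the result is re-oriented. The reductivity $r(P)$ is the minimal number of successive applications of $I$ needed to reach a reducible spherical curve; $r(P)=0$ if $P$ is reducible. *)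

(* Defs.v *)
From mathcomp Require Import all_boot.
Set Implicit Arguments. Unset Strict Implicit. Unset Printing Implicit Defensive.

(* A spherical curve is encoded by its 4-regular map on the sphere:
   darts (half-edges) form a finite set [darts] in a finite type T;
   [sg] is the rotation of darts around a crossing (cycles of length 4),
   [al] is the edge involution (pairs the two ends of an edge).
   Faces (regions) are the orbits of [sg \o al]; going straight through a
   crossing is [sg \o sg], so following the curve is [tau = sg^2 \o al]. *)
Record curve (T : finType) := Curve {
  darts : {set T};
  sg : T -> T;
  al : T -> T }.

Section Curves.
Variable T : finType.
Implicit Types (C : curve T) (d e x y : T).

Definition tau C : T -> T := fun d => sg C (sg C (al C d)).
Definition phi C : T -> T := fun d => sg C (al C d).

Definition same_vertex C x y : bool := fconnect (sg C) x y.

(* the curve is a single closed curve: every dart lies on the traversal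
   starting at d0 or on the reverse traversal *)
Definition single_curve C : Prop :=
  exists2 d0, d0 \in darts C &
    forall d, d \in darts C -> fconnect (tau C) d0 d || fconnect (tau C) (al C d0) d.

Definition nfaces C : nat := fcard (phi C) (darts C).

Definition is_spherical_curve C : Prop :=
  darts C != set0 /\
  {in darts C, forall d, sg C d \in darts C /\ al C d \in darts C} /\
  {in darts C &, injective (sg C)} /\
  {in darts C, forall d, al C (al C d) = d /\ al C d != d} /\
  {in darts C, forall d, [/\ iter 4 (sg C) d = d, sg C d != d & sg C (sg C d) != d]} /\
  single_curve C /\
  (* Euler: V - E + F = 2 with V = #|darts|/4, E = #|darts|/2 *)
  4 * nfaces C = #|darts C| + 8.

(* Gauss word: the k-th letter of the traversal from d0 is the crossing of
   the dart iter k (tau C) d0; its length is the number of edges = #|darts|/2 *)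
Definition gauss_len C : nat := #|darts C| %/ 2.
Definition gauss_letter C d0 (k : nat) : T := iter k (tau C) d0.

Definition alternate C d0 x y : Prop :=
  exists i1 j1 i2 j2,
    [/\ i1 < j1, j1 < i2, i2 < j2 & j2 < gauss_len C] /\
    [/\ same_vertex C (gauss_letter C d0 i1) x, same_vertex C (gauss_letter C d0 j1) y,
        same_vertex C (gauss_letter C d0 i2) x & same_vertex C (gauss_letter C d0 j2) y].

(* crossings (represented by any of their darts) x and y are interlaced *)
Definition interlaced C x y : Prop :=
  ~~ same_vertex C x y /\
  exists2 d0, d0 \in darts C & (alternate C d0 x y \/ alternate C d0 y x).

Definition reducible_crossing C x : Prop :=
  x \in darts C /\ forall y, y \in darts C -> ~ interlaced C x y.

Definition reducible C : Prop := exists x, reducible_crossing C x.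

Definition exactly_two (P Q R : Prop) : Prop :=
  [\/ [/\ P, Q & ~ R], [/\ P, ~ Q & R] | [/\ ~ P, Q & R]].

Definition trigon_typeA C : Prop :=
  exists2 f, f \in darts C &
    let x := f in let y := phi C f in let z := phi C (phi C f) in
    [/\ phi C z = f, y != f,
        ~~ same_vertex C x y, ~~ same_vertex C y z & ~~ same_vertex C z x] /\
        exactly_two (interlaced C x y) (interlaced C y z) (interlaced C z x).

(* smoothing at the crossing of dart p; b selects one of the two ways of
   reconnecting the four darts p, sg p, sg^2 p, sg^3 p *)
Definition vertex_set C p : {set T} := [set d in darts C | same_vertex C p d].

Definition partner C p (b : bool) e : T :=
  if b then (if (e == p) || (e == sg C (sg C p)) then sg C e else iter 3 (sg C) e)
  else (if (e == sg C p) || (e == iter 3 (sg C) p) then sg C e else iter 3 (sg C) e).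

Definition follow C p b e : T :=
  if e \in vertex_set C p then al C (partner C p b e) else e.

Definition smooth C p (b : bool) : curve T :=
  Curve (darts C :\: vertex_set C p)
        (fun d => if d \in vertex_set C p then d else sg C d)
        (fun d => if d \in vertex_set C p then d else iter 4 (follow C p b) (al C d)).

(* inverse-half-twisted splice: the smoothing giving a single closed curve
   (the orientation of the result is irrelevant for everything below) *)
Definition I_step C C' : Prop :=
  exists2 p, p \in darts C & exists b, C' = smooth C p b /\ single_curve C'.

Fixpoint reductivity_le (k : nat) C : Prop :=
  match k with
  | 0 => reducible C
  | k'.+1 => reducible C \/ exists C', I_step C C' /\ reductivity_le k' C'
  end.

End Curves.

(* Main.v *)
Require Import Defs.
From mathcomp Require Import all_boot zify.
Set Implicit Arguments. Unset Strict Implicit. Unset Printing Implicit Defensive.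

Section Basics.
Variable T : finType.
Implicit Types (C : curve T) (d e v w : T).

Definition sg2 C d := sg C (sg C d).

Record wf C : Prop := WF {
  wf_sg : forall d, d \in darts C -> sg C d \in darts C;
  wf_al : forall d, d \in darts C -> al C d \in darts C;
  wf_sg4 : forall d, d \in darts C -> sg C (sg C (sg C (sg C d))) = d;
  wf_sg1 : forall d, d \in darts C -> sg C d <> d;
  wf_sg2 : forall d, d \in darts C -> sg2 C d <> d;
  wf_alK : forall d, d \in darts C -> al C (al C d) = d }.

Record rep C (g : nat -> T) (N : nat) : Prop := REP {
  rep_pos : 0 < N;
  rep_per : g N = g 0;
  rep_tau : forall k, k < N -> tau C (g k) = g k.+1;
  rep_inj : forall i j, i < N -> j < N -> g i = g j -> i = j;
  rep_dis : forall i j, i < N -> j < N -> g i <> sg2 C (g j);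
  rep_cov : forall d, d \in darts C <-> exists2 i, i < N & (d = g i \/ d = sg2 C (g i)) }.

Variable C : curve T.
Hypothesis W : wf C.

Lemma sgD d : d \in darts C -> sg C d \in darts C. Proof. exact: (wf_sg W). Qed.
Lemma alD d : d \in darts C -> al C d \in darts C. Proof. exact: (wf_al W). Qed.
Lemma sg4 d : d \in darts C -> sg C (sg C (sg C (sg C d))) = d. Proof. exact: (wf_sg4 W). Qed.
Lemma sg1n d : d \in darts C -> sg C d <> d. Proof. exact: (wf_sg1 W). Qed.
Lemma sg2n d : d \in darts C -> sg C (sg C d) <> d. Proof. exact: (wf_sg2 W). Qed.
Lemma alK d : d \in darts C -> al C (al C d) = d. Proof. exact: (wf_alK W). Qed.
Lemma sg3n d : d \in darts C -> sg C (sg C (sg C d)) <> d.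
Proof. move=> Hd E; apply: (sg1n Hd). by rewrite -{1}E sg4. Qed.

Lemma sg_inj d e : d \in darts C -> e \in darts C -> sg C d = sg C e -> d = e.
Proof. move=> Hd He E. by rewrite -(sg4 Hd) -(sg4 He) E. Qed.

Lemma sv_char e v : e \in darts C ->
  same_vertex C e v <-> [\/ v = e, v = sg C e, v = sg C (sg C e) | v = sg C (sg C (sg C e))].
Proof.
move=> He; split.
- move/iter_findex; move: (findex _ _ _) => n <-.
  elim: n => [|n IH]; first by constructor 1.
  rewrite iterS; case: IH => ->; [constructor 2|constructor 3|constructor 4|constructor 1]=>//.
  by rewrite sg4.
- case=> ->; [exact: (fconnect_iter _ 0)|exact: (fconnect_iter _ 1)|
   exact: (fconnect_iter _ 2)|exact: (fconnect_iter _ 3)].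
Qed.

Lemma sv_refl e : same_vertex C e e. Proof. exact: connect0. Qed.

Lemma sv_trans e1 e2 e3 : same_vertex C e1 e2 -> same_vertex C e2 e3 -> same_vertex C e1 e3.
Proof. exact: connect_trans. Qed.

Lemma sv_darts e v : e \in darts C -> same_vertex C e v -> v \in darts C.
Proof. move=> He /(sv_char _ He) [] ->; by rewrite ?sgD. Qed.

Lemma sv_sym e v : e \in darts C -> same_vertex C e v -> same_vertex C v e.
Proof.
move=> He Hv; have Hv' := sv_darts He Hv.
have H2 := sv_char e Hv'.
move/(sv_char _ He): Hv => [] E; subst v; apply/H2.
- by constructor 1.
- by constructor 4; rewrite sg4.
- by constructor 3; rewrite sg4.
- by constructor 2; rewrite sg4.
Qed.

Lemma sv_sg e : e \in darts C -> same_vertex C e (sg C e).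
Proof. by move=> He; apply/sv_char=> //; constructor 2. Qed.

Lemma sv_sg2 e : e \in darts C -> same_vertex C e (sg2 C e).
Proof. by move=> He; apply/sv_char=> //; constructor 3. Qed.

End Basics.

Section Rep.
Variable T : finType.
Variable C : curve T.
Hypothesis W : wf C.
Variable g : nat -> T.
Variable N : nat.
Hypothesis R : rep C g N.

Lemma gD k : k <= N -> g k \in darts C.
Proof.
move=> Hk; case: R => HN Hper _ _ _ Hcov.
have [->|Hlt] := eqVneq k N; first rewrite Hper.
- by apply/Hcov; exists 0 => //; left.
- by apply/Hcov; exists k; [lia|left].
Qed.

Lemma sg2gD k : k <= N -> sg2 C (g k) \in darts C.
Proof. by move=> Hk; rewrite /sg2 !(sgD W) // gD. Qed.

Lemma al_g k : k < N -> al C (g k) = sg2 C (g k.+1).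
Proof.
move=> Hk; have Hd : al C (g k) \in darts C by apply: (alD W); apply: gD; lia.
by rewrite -(rep_tau R Hk) /tau /sg2 (sg4 W Hd).
Qed.

Lemma al_sg2g k : k < N -> al C (sg2 C (g k.+1)) = g k.
Proof. by move=> Hk; rewrite -al_g // (alK W) // gD; lia. Qed.

Lemma tau_bwd k : k < N -> tau C (sg2 C (g k.+1)) = sg2 C (g k).
Proof. by move=> Hk; rewrite /tau al_sg2g. Qed.

Lemma iter_fwd0 i s : s + i <= N -> iter i (tau C) (g s) = g (s + i).
Proof.
elim: i => [|i IH] Hi; first by rewrite addn0.
by rewrite iterS IH ?(rep_tau R) ?addnS //; lia.
Qed.

Lemma iter_bwd0 i s : i <= s -> s <= N -> iter i (tau C) (sg2 C (g s)) = sg2 C (g (s - i)).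
Proof.
elim: i => [|i IH] Hi Hs; first by rewrite subn0.
rewrite iterS IH; try lia.
have -> : s - i = (s - i.+1).+1 by lia.
by rewrite tau_bwd //; lia.
Qed.

Definition posF s i := if s + i < N then s + i else s + i - N.
Definition posB s i := if i <= s then s - i else s + N - i.

Lemma iter_fwd i s : s < N -> i < N -> iter i (tau C) (g s) = g (posF s i).
Proof.
move=> Hs Hi; rewrite /posF; case: ifP => H; first by rewrite iter_fwd0 //; lia.
have -> : i = (s + i - N) + (N - s) by lia.
rewrite iterD iter_fwd0; last by lia.
have -> : s + (N - s) = N by lia.
rewrite (rep_per R) iter_fwd0 /=; [congr g|]; lia.
Qed.

Lemma iter_bwd i s : s < N -> i < N -> iter i (tau C) (sg2 C (g s)) = sg2 C (g (posB s i)).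
Proof.
move=> Hs Hi; rewrite /posB; case: ifP => H; first by rewrite iter_bwd0 //; lia.
have -> : i = (i - s) + s by lia.
rewrite iterD iter_bwd0 ?subnn; try lia.
rewrite -(rep_per R) iter_bwd0; try lia; congr (sg2 C (g _)); lia.
Qed.

Lemma letters d0 : d0 \in darts C -> exists2 s, s < N &
  (forall i, i < N -> gauss_letter C d0 i = g (posF s i)) \/
  (forall i, i < N -> gauss_letter C d0 i = sg2 C (g (posB s i))).
Proof.
move=> /(rep_cov R) [s Hs [->|->]]; exists s => //.
- by left=> i Hi; rewrite /gauss_letter iter_fwd.
- by right=> i Hi; rewrite /gauss_letter iter_bwd.
Qed.

Lemma sg2_inj d e : d \in darts C -> e \in darts C -> sg2 C d = sg2 C e -> d = e.
Proof. by move=> Hd He /(sg_inj W (sgD W Hd) (sgD W He)) /(sg_inj W Hd He). Qed.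

Lemma sg2K d : d \in darts C -> sg2 C (sg2 C d) = d.
Proof. exact: (sg4 W). Qed.

Lemma two_pos a b v : a < N -> b < N -> a <> b ->
  same_vertex C (g a) v -> same_vertex C (g b) v ->
  forall k, k < N -> same_vertex C (g k) v -> k = a \/ k = b.
Proof.
move=> Ha Hb Hab Hav Hbv k Hk Hkv.
have Da := gD (ltnW Ha); have Db := gD (ltnW Hb); have Dk := gD (ltnW Hk).
have Hab' : same_vertex C (g a) (g b) by apply: (sv_trans Hav); apply: (sv_sym W) => //; apply: (sv_darts W Da Hav).
have Hak : same_vertex C (g a) (g k) by apply: (sv_trans Hav); apply: (sv_sym W) => //; apply: (sv_darts W Da Hav).
have [->|Hka] := eqVneq k a; first by left.
have [->|Hkb] := eqVneq k b; first by right.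
exfalso.
have inj := rep_inj R; have dis := rep_dis R.
move/eqP: Hka => Hka; move/eqP: Hkb => Hkb.
have S4 := sg4 W Da.
move/(sv_char W _ Da): Hab' => [] Eb; move/(sv_char W _ Da): Hak => [] Ek.
all: first [ by apply: Hab; apply: inj; rewrite ?Eb
           | by apply: Hka; apply: inj; rewrite ?Ek
           | by apply: Hkb; apply: inj; rewrite ?Ek ?Eb
           | by apply: (dis b a Hb Ha); rewrite Eb
           | by apply: (dis k a Hk Ha); rewrite Ek
           | by apply: (dis k b Hk Hb); rewrite Ek Eb /sg2 S4
           | by apply: (dis b k Hb Hk); rewrite Ek Eb /sg2 S4 ].
Qed.

Lemma adjacent m : 0 < m -> m < N -> same_vertex C (g m) (g 0) ->
  g m = sg C (g 0) \/ g m = sg C (sg C (sg C (g 0))).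
Proof.
move=> Hm HmN Hsv.
have D0 := gD (leq0n N); have Dm := gD (ltnW HmN).
have := sv_sym W Dm Hsv; move/(sv_char W _ D0) => [] E.
- by move: (rep_inj R HmN (rep_pos R) E); lia.
- by left.
- by exfalso; apply: (rep_dis R HmN (rep_pos R) E).
- by right.
Qed.

Lemma dartsE : darts C = [set g i | i : 'I_N] :|: [set sg2 C (g i) | i : 'I_N].
Proof.
apply/setP=> d; rewrite inE; apply/idP/orP.
- move/(rep_cov R)=> [i Hi [->|->]]; [left|right]; apply/imsetP; by exists (Ordinal Hi).
- case=> /imsetP [i _ ->]; apply/(rep_cov R); exists i => //; by [left|right].
Qed.

Lemma card_darts : #|darts C| = N.*2.
Proof.
have H := cardsUI [set g i | i : 'I_N] [set sg2 C (g i) | i : 'I_N].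
rewrite -dartsE in H.
have E0 : [set g i | i : 'I_N] :&: [set sg2 C (g i) | i : 'I_N] = set0.
  apply/setP=> d; rewrite !inE; apply/negP=> /andP [/imsetP [i _ ->] /imsetP [j _ E]].
  by apply: (rep_dis R (ltn_ord i) (ltn_ord j) E).
rewrite E0 cards0 addn0 in H; rewrite H !card_imset ?card_ord ?addnn //.
- move=> i j /(sg2_inj (gD (ltnW (ltn_ord i))) (gD (ltnW (ltn_ord j)))) E.
  apply: val_inj; exact: (rep_inj R (ltn_ord i) (ltn_ord j) E).
- move=> i j E; apply: val_inj; exact: (rep_inj R (ltn_ord i) (ltn_ord j) E).
Qed.

Lemma glen : gauss_len C = N.
Proof. by rewrite /gauss_len card_darts -muln2 mulnK. Qed.

Lemma rep_single : single_curve C.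
Proof.
exists (g 0); first exact: gD.
move=> d /(rep_cov R) [i Hi [->|->]]; apply/orP; [left|right].
- by rewrite -(iter_fwd0 (s:=0) (ltnW Hi)); apply: fconnect_iter.
- have HN := rep_pos R.
  have -> : al C (g 0) = sg2 C (g 1) by rewrite al_g.
  case: i Hi => [|i] Hi.
  + by rewrite -(iter_bwd0 (s:=1) (i:=1)) //; apply: fconnect_iter.
  + case: i Hi => [|i] Hi; first exact: connect0.
    apply: (connect_trans (y := sg2 C (g 0))).
      by rewrite -(iter_bwd0 (s:=1) (i:=1)) //; apply: fconnect_iter.
    rewrite -(rep_per R).
    have -> : sg2 C (g i.+2) = iter (N - i.+2) (tau C) (sg2 C (g N)).
      by rewrite iter_bwd0; [congr (sg2 C (g _))|..]; lia.
    exact: fconnect_iter.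
Qed.

End Rep.

Definition ccw x y z := (x < y < z) \/ (y < z < x) \/ (z < x < y).
Definition cross a b c d := ~ (ccw a c b <-> ccw a d b).
Ltac split_all := repeat match goal with H : _ \/ _ |- _ => destruct H as [H|H] end;
  repeat match goal with H : _ /\ _ |- _ => destruct H end; subst.

Lemma alt_core A B X Y i1 j1 i2 j2 :
  i1 < j1 -> j1 < i2 -> i2 < j2 ->
  (i1 = A \/ i1 = B) -> (j1 = X \/ j1 = Y) -> (i2 = A \/ i2 = B) -> (j2 = X \/ j2 = Y) ->
  cross A B X Y.
Proof. rewrite /cross /ccw => *; split_all; lia. Qed.

Definition rotF N s x := if s <= x then x - s else x + N - s.
Definition rotB N s x := if x <= s then s - x else s + N - x.
Lemma ccw_rotF N s x y z : s < N -> x < N -> y < N -> z < N -> x <> y -> y <> z -> x <> z ->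
  ccw (rotF N s x) (rotF N s y) (rotF N s z) <-> ccw x y z.
Proof. rewrite /rotF /ccw => *; do 3 case: ifP => ?; lia. Qed.
Lemma ccw_rotB N s x y z : s < N -> x < N -> y < N -> z < N -> x <> y -> y <> z -> x <> z ->
  ccw (rotB N s x) (rotB N s y) (rotB N s z) <-> ccw z y x.
Proof. rewrite /rotB /ccw => *; do 3 case: ifP => ?; lia. Qed.
Lemma ccw_swap x y z : x <> y -> y <> z -> x <> z -> (ccw z y x <-> ~ ccw x y z).
Proof. rewrite /ccw; lia. Qed.

Lemma cross_rotF N s a b c d : s < N -> a < N -> b < N -> c < N -> d < N ->
  a <> b -> c <> d -> a <> c -> a <> d -> b <> c -> b <> d ->
  cross (rotF N s a) (rotF N s b) (rotF N s c) (rotF N s d) -> cross a b c d.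
Proof.
move=> Hs Ha Hb Hc Hd Hab Hcd Hac Had Hbc Hbd.
have Hcb : c <> b by move=> E; apply: Hbc; rewrite E.
have Hdb : d <> b by move=> E; apply: Hbd; rewrite E.
by rewrite /cross (ccw_rotF Hs Ha Hc Hb Hac Hcb Hab) (ccw_rotF Hs Ha Hd Hb Had Hdb Hab).
Qed.

Lemma cross_rotB N s a b c d : s < N -> a < N -> b < N -> c < N -> d < N ->
  a <> b -> c <> d -> a <> c -> a <> d -> b <> c -> b <> d ->
  cross (rotB N s a) (rotB N s b) (rotB N s c) (rotB N s d) -> cross a b c d.
Proof.
move=> Hs Ha Hb Hc Hd Hab Hcd Hac Had Hbc Hbd.
have Hcb : c <> b by move=> E; apply: Hbc; rewrite E.
have Hdb : d <> b by move=> E; apply: Hbd; rewrite E.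
rewrite /cross (ccw_rotB Hs Ha Hc Hb Hac Hcb Hab) (ccw_rotB Hs Ha Hd Hb Had Hdb Hab).
rewrite (ccw_swap Hac Hcb Hab) (ccw_swap Had Hdb Hab); tauto.
Qed.

Lemma cross_sym a b c d : a <> b -> c <> d -> a <> c -> a <> d -> b <> c -> b <> d -> cross c d a b -> cross a b c d.
Proof. rewrite /cross /ccw; lia. Qed.

Lemma cross_cases a b c d : a <> b -> c <> d -> a <> c -> a <> d -> b <> c -> b <> d -> cross a b c d ->
 ((a < c < b /\ b < d) \/ (a < d < b /\ b < c)) \/ ((b < c < a /\ a < d) \/ (b < d < a /\ a < c)) \/
 ((c < a < d /\ d < b) \/ (c < b < d /\ d < a)) \/ ((d < a < c /\ c < b) \/ (d < b < c /\ c < a)).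
Proof. rewrite /cross /ccw; lia. Qed.

Section Inter.
Variable T : finType.
Variable C : curve T.
Hypothesis W : wf C.
Variable g : nat -> T.
Variable N : nat.
Hypothesis R : rep C g N.

Lemma posF_cases s i : ((s + i < N /\ posF N s i = s + i) \/ (N <= s + i /\ posF N s i = s + i - N)).
Proof. rewrite /posF; case: ifP => H; [left|right]; split => //; lia. Qed.
Lemma posB_cases s i : ((i <= s /\ posB N s i = s - i) \/ (s < i /\ posB N s i = s + N - i)).
Proof. rewrite /posB; case: ifP => H; [left|right]; split => //; lia. Qed.

Lemma posF_lt s i : s < N -> i < N -> posF N s i < N.
Proof. rewrite /posF; case: ifP; lia. Qed.
Lemma posB_lt s i : s < N -> i < N -> posB N s i < N.
Proof. rewrite /posB; case: ifP; lia. Qed.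

Lemma sv_of_sg2 e v : e \in darts C -> same_vertex C (sg2 C e) v -> same_vertex C e v.
Proof. move=> He H; exact: (sv_trans (sv_sg2 W He) H). Qed.

Lemma sv_common e v w : e \in darts C -> same_vertex C e v -> same_vertex C e w -> same_vertex C v w.
Proof.
move=> He Hv Hw; apply: (sv_trans _ Hw); apply: (sv_sym W) => //.
Qed.

Lemma rotF_posF s i : s < N -> i < N -> rotF N s (posF N s i) = i.
Proof. move=> *; rewrite /posF; case: ifP => ?; rewrite /rotF; case: ifP => ?; lia. Qed.
Lemma rotB_posB s i : s < N -> i < N -> rotB N s (posB N s i) = i.
Proof. move=> *; rewrite /posB; case: ifP => ?; rewrite /rotB; case: ifP => ?; lia. Qed.

Lemma pair_not v w a b c d : a < N -> b < N -> c < N -> d < N -> a <> b -> c <> d ->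
  same_vertex C (g a) v -> same_vertex C (g b) v ->
  same_vertex C (g c) w -> same_vertex C (g d) w ->
  ~ cross a b c d -> ~ interlaced C v w.
Proof.
move=> Ha Hb Hc Hd Hab Hcd Hav Hbv Hcw Hdw Hnc [nsv [d0 Hd0 Halt]].
have Pv := two_pos W R Ha Hb Hab Hav Hbv.
have Pw := two_pos W R Hc Hd Hcd Hcw Hdw.
have D k : k < N -> g k \in darts C by move=> Hk; apply: (gD R); lia.
have dist k : k < N -> same_vertex C (g k) v -> same_vertex C (g k) w -> False.
  by move=> Hk H1 H2; move/negP: nsv; apply; apply: (sv_common (D _ Hk)).
have Hac : a <> c by move=> E; subst; apply: (dist c).
have Had : a <> d by move=> E; subst; apply: (dist d).
have Hbc : b <> c by move=> E; subst; apply: (dist c).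
have Hbd : b <> d by move=> E; subst; apply: (dist d).
have Hnc' : ~ cross c d a b by move=> H; apply: Hnc; apply: cross_sym.
have [s Hs [HF|HB]] := letters W R Hd0; rewrite /alternate (glen W R) in Halt.
- have P x k : k < N -> same_vertex C (gauss_letter C d0 k) x -> same_vertex C (g (posF N s k)) x.
    by move=> Hk; rewrite HF.
  have Q x k p q : k < N -> (forall l, l < N -> same_vertex C (g l) x -> l = p \/ l = q) ->
     same_vertex C (gauss_letter C d0 k) x -> k = rotF N s p \/ k = rotF N s q.
    move=> Hk Px /(P _ _ Hk) /(Px _ (posF_lt Hs Hk)) [] <-; rewrite rotF_posF //; by [left|right].
  case: Halt => [] [i1 [j1 [i2 [j2 [[h1 h2 h3 h4] [s1 s2 s3 s4]]]]]].
  + apply: Hnc; apply: (cross_rotF (N := N) (s := s)) => //.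
    apply: (alt_core h1 h2 h3); [exact: (Q v i1 _ _ ltac:(move: h1 h2 h3 h4; clear; lia) Pv s1)|exact: (Q w j1 _ _ ltac:(move: h1 h2 h3 h4; clear; lia) Pw s2)|exact: (Q v i2 _ _ ltac:(move: h1 h2 h3 h4; clear; lia) Pv s3)|exact: (Q w j2 _ _ ltac:(move: h1 h2 h3 h4; clear; lia) Pw s4)].
  + apply: Hnc'; apply: (cross_rotF (N := N) (s := s)) => //; try (by move=> ?; subst).
    apply: (alt_core h1 h2 h3); [exact: (Q w i1 _ _ ltac:(move: h1 h2 h3 h4; clear; lia) Pw s1)|exact: (Q v j1 _ _ ltac:(move: h1 h2 h3 h4; clear; lia) Pv s2)|exact: (Q w i2 _ _ ltac:(move: h1 h2 h3 h4; clear; lia) Pw s3)|exact: (Q v j2 _ _ ltac:(move: h1 h2 h3 h4; clear; lia) Pv s4)].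
- have P x k : k < N -> same_vertex C (gauss_letter C d0 k) x -> same_vertex C (g (posB N s k)) x.
    move=> Hk; rewrite HB //; apply: sv_of_sg2; apply: D; exact: posB_lt.
  have Q x k p q : k < N -> (forall l, l < N -> same_vertex C (g l) x -> l = p \/ l = q) ->
     same_vertex C (gauss_letter C d0 k) x -> k = rotB N s p \/ k = rotB N s q.
    move=> Hk Px /(P _ _ Hk) /(Px _ (posB_lt Hs Hk)) [] <-; rewrite rotB_posB //; by [left|right].
  case: Halt => [] [i1 [j1 [i2 [j2 [[h1 h2 h3 h4] [s1 s2 s3 s4]]]]]].
  + apply: Hnc; apply: (cross_rotB (N := N) (s := s)) => //.
    apply: (alt_core h1 h2 h3); [exact: (Q v i1 _ _ ltac:(move: h1 h2 h3 h4; clear; lia) Pv s1)|exact: (Q w j1 _ _ ltac:(move: h1 h2 h3 h4; clear; lia) Pw s2)|exact: (Q v i2 _ _ ltac:(move: h1 h2 h3 h4; clear; lia) Pv s3)|exact: (Q w j2 _ _ ltac:(move: h1 h2 h3 h4; clear; lia) Pw s4)].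
  + apply: Hnc'; apply: (cross_rotB (N := N) (s := s)) => //; try (by move=> ?; subst).
    apply: (alt_core h1 h2 h3); [exact: (Q w i1 _ _ ltac:(move: h1 h2 h3 h4; clear; lia) Pw s1)|exact: (Q v j1 _ _ ltac:(move: h1 h2 h3 h4; clear; lia) Pv s2)|exact: (Q w i2 _ _ ltac:(move: h1 h2 h3 h4; clear; lia) Pw s3)|exact: (Q v j2 _ _ ltac:(move: h1 h2 h3 h4; clear; lia) Pv s4)].
Qed.

Lemma pair_yes v w a b c d : a < N -> b < N -> c < N -> d < N -> a <> b -> c <> d ->
  same_vertex C (g a) v -> same_vertex C (g b) v ->
  same_vertex C (g c) w -> same_vertex C (g d) w -> ~~ same_vertex C v w ->
  cross a b c d -> interlaced C v w.
Proof.
move=> Ha Hb Hc Hd Hab Hcd Hav Hbv Hcw Hdw nsv Hc4; split => //.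
exists (g 0); first by apply: (gD R).
have L k : k < N -> gauss_letter C (g 0) k = g k.
  by move=> Hk; rewrite /gauss_letter (iter_fwd0 R (s:=0)) //; lia.
rewrite /alternate (glen W R).
have Hac : a <> c by move=> E; subst; move/negP: nsv; apply; apply: (sv_common (gD R (ltnW Hc))).
have Had : a <> d by move=> E; subst; move/negP: nsv; apply; apply: (sv_common (gD R (ltnW Hd))).
have Hbc : b <> c by move=> E; subst; move/negP: nsv; apply; apply: (sv_common (gD R (ltnW Hc))).
have Hbd : b <> d by move=> E; subst; move/negP: nsv; apply; apply: (sv_common (gD R (ltnW Hd))).
case: (cross_cases Hab Hcd Hac Had Hbc Hbd Hc4) =>
  [[[/andP[h1 h2] h3]|[/andP[h1 h2] h3]]|[[[/andP[h1 h2] h3]|[/andP[h1 h2] h3]]|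
   [[[/andP[h1 h2] h3]|[/andP[h1 h2] h3]]|[[/andP[h1 h2] h3]|[/andP[h1 h2] h3]]]]].
- by left; exists a, c, b, d; split; [split|split; rewrite L].
- by left; exists a, d, b, c; split; [split|split; rewrite L].
- by left; exists b, c, a, d; split; [split|split; rewrite L].
- by left; exists b, d, a, c; split; [split|split; rewrite L].
- by right; exists c, a, d, b; split; [split|split; rewrite L].
- by right; exists c, b, d, a; split; [split|split; rewrite L].
- by right; exists d, a, c, b; split; [split|split; rewrite L].
- by right; exists d, b, c, a; split; [split|split; rewrite L].
Qed.

Lemma exists_two_pos v : v \in darts C -> exists a b, [/\ a < N, b < N, a <> b,
  same_vertex C (g a) v & same_vertex C (g b) v].
Proof.
move=> Hv; have [i Hi Ei] : exists2 i, i < N & (g i = v \/ g i = sg2 C v).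
  move/(rep_cov R): Hv => [i Hi [E|E]]; exists i => //; [left|right] => //.
  by rewrite E (sg2K W) // (gD R) //; lia.
have Di : g i \in darts C by apply: (gD R); lia.
have Hiv : same_vertex C (g i) v.
  case: Ei => ->; first exact: sv_refl.
  apply: (sv_sym W); first exact: Hv.
  exact: (sv_sg2 W Hv).
have /(rep_cov R) [j Hj Ej] := sgD W Di.
exists i, j; split => //.
- move=> E; subst j; case: Ej => E.
  + exact: (sg1n W Di E).
  + apply: (sg1n W Di); apply: (sg_inj W (sgD W Di) Di); exact: (esym E).
- apply: (sv_trans _ Hiv); apply: (sv_sym W Di).
  case: Ej => E; first by rewrite -E; exact: (sv_sg W Di).
  have -> : g j = sg2 C (sg C (g i)) by rewrite E (sg2K W) // (gD R) //; lia.
  apply/(sv_char W _ Di); by constructor 4.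
Qed.

End Inter.

Section Sph.
Variable T : finType.
Variable C : curve T.
Hypothesis S : is_spherical_curve C.

Lemma sph_wf : wf C.
Proof.
case: S => _ [Hcl [_ [Hal [Hsg _]]]].
split.
- by move=> d /Hcl [].
- by move=> d /Hcl [].
- by move=> d /Hsg [].
- by move=> d /Hsg [_ /eqP].
- by move=> d /Hsg [_ _ /eqP].
- by move=> d /Hal [].
Qed.

Let W := sph_wf.

Lemma al_neq d : d \in darts C -> al C d <> d.
Proof. by case: S => _ [_ [_ [Hal _]]] /Hal [_ /eqP]. Qed.

Lemma tauD d : d \in darts C -> tau C d \in darts C.
Proof. by move=> Hd; rewrite /tau !(sgD W) // (alD W). Qed.

Lemma tau_inj d e : d \in darts C -> e \in darts C -> tau C d = tau C e -> d = e.
Proof.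
move=> Hd He; rewrite /tau => E.
have Ad := alD W Hd; have Ae := alD W He.
move/(sg_inj W (sgD W Ad) (sgD W Ae))/(sg_inj W Ad Ae): E => E.
by rewrite -(alK W Hd) E (alK W He).
Qed.

Lemma sph_rep : exists g N, rep C g N.
Proof.
case: (S) => _ [_ [_ [_ [_ [[d0 Hd0 Hcov] _]]]]].
pose g k := iter k (tau C) d0.
have gD k : g k \in darts C by elim: k => [|k IH] //; rewrite /g iterS tauD.
have gS k : g k.+1 = tau C (g k) by [].
have gadd k l : g (k + l) = iter k (tau C) (g l) by rewrite /g iterD.
have [x [y Hxy Exy]] : exists x : 'I_(#|darts C|.+1), exists2 y : 'I_(#|darts C|.+1), x != y & g x = g y.
  have : ~~ injectiveb (fun i : 'I_(#|darts C|.+1) => g i).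
    apply/negP => /injectiveP Hinj.
    have Hs : [set g (nat_of_ord i) | i : 'I_(#|darts C|.+1)] \subset darts C.
      by apply/subsetP => d /imsetP [i _ ->].
    by have := subset_leq_card Hs; rewrite card_imset // card_ord ltnn.
  by move/injectivePn => [x [y Hxy Exy]]; exists x, y.
have cancel0 i j : g (i + j) = g i -> g j = g 0.
  elim: i => [|i IH]; first by rewrite add0n.
  rewrite addSn !gS => /(tau_inj (gD _) (gD _)); exact: IH.
have Pex : exists n, (0 < n) && (g n == g 0).
  have : (x : nat) != y by rewrite (inj_eq val_inj).
  rewrite neq_ltn => /orP [] Hlt.
  - exists (y - x); apply/andP; split; first by rewrite subn_gt0.
    by apply/eqP; apply: (cancel0 x); rewrite subnKC ?(ltnW Hlt).
  - exists (x - y); apply/andP; split; first by rewrite subn_gt0.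
    by apply/eqP; apply: (cancel0 y); rewrite subnKC ?(ltnW Hlt).
case: (ex_minnP Pex) => N HP Hmin; move: HP => /= /andP [HN /eqP HgN].
have gmul j m : g (j + m * N) = g j.
  elim: m => [|m IH]; first by rewrite mul0n addn0.
  by rewrite mulSn addnCA addnC gadd HgN; exact: IH.
have gmod k : g k = g (k %% N).
  by rewrite {1}(divn_eq k N) addnC gmul.
have sg2D d : d \in darts C -> sg2 C d \in darts C by move=> Hd; rewrite /sg2 !(sgD W).
have al_g k : al C (g k) = sg2 C (g k.+1).
  by rewrite gS /tau /sg2 (sg4 W) // (alD W).
have back k : tau C (sg2 C (g k.+1)) = sg2 C (g k).
  by rewrite /tau -al_g (alK W).
have bwd n k : iter n (tau C) (sg2 C (g (k + n))) = sg2 C (g k).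
  elim: n k => [|n IH] k; first by rewrite addn0.
  by rewrite iterS -addSnnS IH back.
exists g, N; split => //.
- move=> i j Hi Hj E.
  have [Hij|Hij|//] := ltngtP i j.
  + have := Hmin (j - i); rewrite subn_gt0 Hij /= => /(_ _)/idP H.
    have : g (j - i) = g 0 by apply: (cancel0 i); rewrite subnKC ?(ltnW Hij).
    move=> /eqP /H; lia.
  + have := Hmin (i - j); rewrite subn_gt0 Hij /= => /(_ _)/idP H.
    have : g (i - j) = g 0 by apply: (cancel0 j); rewrite subnKC ?(ltnW Hij).
    move=> /eqP /H; lia.
- move=> i j _ _ E.
  pose J := j + i.+1 * N.
  have EJ : g J = g j by rewrite /J gmul.
  have claim n : n <= J -> g (i + n) = sg2 C (g (J - n)).
    elim: n => [|n IH] Hn; first by rewrite addn0 subn0 EJ.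
    rewrite addnS gS IH; last by lia.
    have -> : J - n = (J - n.+1).+1 by lia.
    by rewrite back.
  have HJ : i < J by rewrite /J; nia.
  pose D := J - i.
  have HD := divn_eq D 2.
  have Hq : D %/ 2 <= J by lia.
  have := claim _ Hq.
  have [Hr|Hr] : D %% 2 = 0 \/ D %% 2 = 1 by lia.
  + have -> : J - D %/ 2 = i + D %/ 2 by lia.
    by move/esym; apply: (sg2n W (gD _)).
  + have -> : J - D %/ 2 = (i + D %/ 2).+1 by lia.
    move: (i + D %/ 2) => t Et.
    have E2 : sg2 C (g t) = g t.+1 by rewrite Et /sg2 (sg4 W).
    apply: (al_neq (gD t)).
    have Dt := gD t; have Da := alD W Dt.
    move: E2; rewrite gS /tau => /(sg_inj W (sgD W Dt) (sgD W Da)) /(sg_inj W Dt Da).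
    by move/esym.
- move=> d; split.
  + move=> Hd; case/orP: (Hcov d Hd) => /iter_findex; move: (findex _ _ _) => n <-.
    * exists (n %% N); first by rewrite ltn_pmod.
      by left; rewrite -gmod.
    * have -> : al C d0 = sg2 C (g 1) by rewrite -al_g.
      exists ((1 + n * N - n) %% N); first by rewrite ltn_pmod.
      have Hn : n <= 1 + n * N by nia.
      by right; rewrite -gmod -{1}(gmul 1 n) -{1}(subnK Hn) bwd.
  + by move=> [i _ [->|->]]; [apply: gD|apply: sg2D; apply: gD].
Qed.
End Sph.

Lemma mod_split x N : x < N.*2 -> x %% N = if x < N then x else x - N.
Proof.
move=> Hx; case: ifP => H; first by rewrite modn_small.
have -> : x = (x - N) + N by lia.
rewrite modnDr modn_small; lia.
Qed.

Section Rot.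
Variable T : finType.
Variable C : curve T.
Hypothesis W : wf C.
Variable g : nat -> T.
Variable N : nat.
Hypothesis R : rep C g N.
Variable s : nat.
Hypothesis Hs : s < N.

Definition rotg k := g ((k + s) %% N).

Lemma rotE k : k < N -> rotg k = g (if k + s < N then k + s else k + s - N).
Proof. by move=> Hk; rewrite /rotg mod_split //; lia. Qed.

Lemma rep_rot : rep C rotg N.
Proof.
have HN := rep_pos R.
split => //.
- by rewrite /rotg modnDl add0n.
- move=> k Hk; rewrite /rotg (mod_split (x := k + s)); last by lia.
  rewrite (mod_split (x := k.+1 + s)); last by lia.
  case: ifP => H1; rewrite (rep_tau R); try lia.
  + case: ifP => H2; first by congr g; lia.
    have -> : (k + s).+1 = N by lia.
    rewrite (rep_per R); congr g; lia.
  + case: ifP => H2; first by lia.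
    congr g; lia.
- move=> i j Hi Hj; rewrite !rotE // => /(rep_inj R) H.
  by move: H; do 2 case: ifP => ?; lia.
- by move=> i j Hi Hj; rewrite !rotE //; apply: (rep_dis R); case: ifP => ?; lia.
- move=> d; split.
  + move/(rep_cov R) => [i Hi E].
    case: (leqP s i) => H1.
    * exists (i - s); first by lia.
      rewrite rotE; last by lia.
      by case: ifP => ?; [have -> : i - s + s = i by lia|lia].
    * exists (i + N - s); first by lia.
      rewrite rotE; last by lia.
      by case: ifP => ?; [lia|have -> : i + N - s + s - N = i by lia].
  + move=> [i Hi E]; apply/(rep_cov R).
    exists (if i + s < N then i + s else i + s - N); first by case: ifP => ?; lia.
    by rewrite -rotE.
Qed.

End Rot.

Section Smooth.
Variable T : finType.
Variable C : curve T.
Hypothesis W : wf C.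
Variable g : nat -> T.
Variable N : nat.
Hypothesis R : rep C g N.
Variable m : nat.
Hypothesis Hm1 : 1 < m.
Hypothesis Hm2 : m.+1 < N.
Hypothesis Hsv : same_vertex C (g m) (g 0).

Let D := gD R.
Let D2 := sg2gD W R.

Lemma Hp : g 0 \in darts C. Proof. exact: D. Qed.

Definition bb := g m == sg C (g 0).
Notation VV := (vertex_set C (g 0)).

Lemma inV e : (e \in VV) = (e \in darts C) && same_vertex C (g 0) e.
Proof. by rewrite inE. Qed.

Lemma Vg i : i < N -> (g i \in VV) = (i == 0) || (i == m).
Proof.
move=> Hi; rewrite inV D ?(ltnW Hi) //=.
apply/idP/idP.
- move=> H; have H' := sv_sym W Hp H.
  have Hm : m < N by lia.
  have := two_pos W R (rep_pos R) Hm _ (sv_refl C (g 0)) Hsv Hi H'.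
  case; [lia| by move=> ->| by move=> ->; rewrite eqxx orbT].
- case/orP=> /eqP ->; first exact: sv_refl.
  by apply: (sv_sym W); [apply: D; lia|].
Qed.

Lemma sv_sg2_iff e v : e \in darts C -> same_vertex C v (sg2 C e) = same_vertex C v e.
Proof.
move=> He; apply/idP/idP => H.
- apply: (sv_trans H); apply: (sv_sym W); first exact: He.
  exact: (sv_sg2 W He).
- exact: (sv_trans H (sv_sg2 W He)).
Qed.

Lemma Vsg2g i : i < N -> (sg2 C (g i) \in VV) = (i == 0) || (i == m).
Proof.
move=> Hi; rewrite inV sv_sg2_iff ?D ?(ltnW Hi) // D2 ?(ltnW Hi) //= -Vg // inV D //; lia.
Qed.

Lemma VgN : g N \in VV. Proof. by rewrite (rep_per R) Vg ?(rep_pos R). Qed.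

Lemma sgV e : e \in darts C -> (sg C e \in VV) = (e \in VV).
Proof.
move=> He; rewrite !inV sgD // He /=; apply/idP/idP => H.
- apply: (sv_trans H); apply: (sv_sym W); [exact: He|exact: (sv_sg W He)].
- exact: (sv_trans H (sv_sg W He)).
Qed.

Notation p := (g 0).
Lemma d01 : sg C p <> p. Proof. exact: (sg1n W Hp). Qed.
Lemma d02 : sg C (sg C p) <> p. Proof. exact: (sg2n W Hp). Qed.
Lemma d03 : sg C (sg C (sg C p)) <> p. Proof. exact: (sg3n W Hp). Qed.
Lemma d12 : sg C (sg C p) <> sg C p.
Proof. move/(sg_inj W (sgD W Hp) Hp); exact: d01. Qed.
Lemma d13 : sg C (sg C (sg C p)) <> sg C p.
Proof. move/(sg_inj W (sgD W (sgD W Hp)) Hp); exact: d02. Qed.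
Lemma d23 : sg C (sg C (sg C p)) <> sg C (sg C p).
Proof. move/(sg_inj W (sgD W (sgD W Hp)) (sgD W Hp)); exact: d12. Qed.

Lemma sg4p : sg C (sg C (sg C (sg C p))) = p. Proof. exact: (sg4 W Hp). Qed.

Ltac neq1 := first [exact: d01|exact: d02|exact: d03|exact: d12|exact: d13|exact: d23].
Ltac neqs := repeat match goal with
 | |- context [?a == ?b] => (have -> : (a == b) = false by apply/eqP; first [neq1 | move/esym; neq1])
 end.

Lemma partner_facts :
  [/\ partner C p bb p = g m, partner C p bb (g m) = p,
      partner C p bb (sg2 C p) = sg2 C (g m) & partner C p bb (sg2 C (g m)) = sg2 C p].
Proof.
have Hm : 0 < m by lia.
have HmN : m < N by lia.
rewrite /bb /partner /sg2 /=.
have E5 : sg C (sg C (sg C (sg C (sg C p)))) = sg C p by rewrite sg4p.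
have E6 : sg C (sg C (sg C (sg C (sg C (sg C p))))) = sg C (sg C p) by rewrite sg4p.
have E7 : sg C (sg C (sg C (sg C (sg C (sg C (sg C p)))))) = sg C (sg C (sg C p)) by rewrite sg4p.
case: (adjacent W R Hm HmN Hsv) => ->; 
  do 4 (rewrite ?E7 ?E6 ?E5 ?sg4p ?eqxx ?orbT ?orbF /=; neqs); by [].
Qed.

Definition C' := smooth C (g 0) bb.
Notation fol := (follow C (g 0) bb).

Lemma sgC' d : d \notin VV -> sg C' d = sg C d.
Proof. by move=> H; rewrite /= (negbTE H). Qed.

Lemma alC' d : d \notin VV -> al C' d = iter 4 fol (al C d).
Proof. by move=> H; rewrite /= (negbTE H). Qed.

Lemma fol_out n e : e \notin VV -> iter n fol e = e.
Proof. move=> H; elim: n => // n IH; by rewrite iterS IH /follow (negbTE H). Qed.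

Lemma fol_in e : e \in VV -> al C (partner C (g 0) bb e) \notin VV -> iter 4 fol e = al C (partner C (g 0) bb e).
Proof.
move=> H1 H2; have -> : 4 = 3 + 1 by [].
have E1 : iter 1 fol e = al C (partner C (g 0) bb e) by rewrite /= /follow H1.
by rewrite iterD E1 fol_out.
Qed.

Lemma nV_g i : i < N -> i != 0 -> i != m -> g i \notin VV.
Proof. by move=> Hi H1 H2; rewrite Vg // (negbTE H1) (negbTE H2). Qed.
Lemma nV_sg2g i : i < N -> i != 0 -> i != m -> sg2 C (g i) \notin VV.
Proof. by move=> Hi H1 H2; rewrite Vsg2g // (negbTE H1) (negbTE H2). Qed.

Lemma A1 i : 0 < i -> i != m -> i.+1 < N -> i.+1 != m -> al C' (g i) = sg2 C (g i.+1).
Proof.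
move=> H0 Hm H1 Hm'; rewrite alC'; last by apply: nV_g => //; lia.
by rewrite (al_g W R) ?fol_out //; [apply: nV_sg2g|lia].
Qed.

Lemma alsg2N : al C (sg2 C (g 0)) = g N.-1.
Proof. by rewrite -(rep_per R) -{1}(_ : N.-1.+1 = N) ?(al_sg2g W R) //; lia. Qed.

Lemma A2 : al C' (g m.-1) = g N.-1.
Proof.
case: partner_facts => _ _ _ P4.
rewrite alC'; last by apply: nV_g; lia.
rewrite (al_g W R); last by lia.
have -> : m.-1.+1 = m by lia.
have S1 : sg2 C (g m) \in VV by rewrite Vsg2g ?eqxx ?orbT //; lia.
have S2 : al C (partner C p bb (sg2 C (g m))) \notin VV by rewrite P4 alsg2N; apply: nV_g; lia.
by rewrite (fol_in S1 S2) P4 alsg2N.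
Qed.

Lemma A3 : al C' (g N.-1) = g m.-1.
Proof.
case: partner_facts => _ _ P3 _.
rewrite alC'; last by apply: nV_g; lia.
rewrite (al_g W R); last by lia.
have -> : N.-1.+1 = N by lia.
rewrite (rep_per R).
have E : al C (sg2 C (g m)) = g m.-1 by rewrite -{1}(_ : m.-1.+1 = m) ?(al_sg2g W R) //; lia.
have S1 : sg2 C (g 0) \in VV by rewrite Vsg2g ?eqxx //; lia.
have S2 : al C (partner C p bb (sg2 C (g 0))) \notin VV by rewrite P3 E; apply: nV_g; lia.
by rewrite (fol_in S1 S2) P3 E.
Qed.

Lemma A4 i : 1 < i -> i < N -> i != m -> i != m.+1 -> al C' (sg2 C (g i)) = g i.-1.
Proof.
move=> H1 H2 H3 H4; rewrite alC'; last by apply: nV_sg2g; lia.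
have E : al C (sg2 C (g i)) = g i.-1 by rewrite -{1}(_ : i.-1.+1 = i) ?(al_sg2g W R) //; lia.
rewrite E fol_out //; apply: nV_g; lia.
Qed.

Lemma A5 : al C' (sg2 C (g 1)) = sg2 C (g m.+1).
Proof.
case: partner_facts => P1 _ _ _.
rewrite alC'; last by apply: nV_sg2g; lia.
rewrite (al_sg2g W R (k := 0)); last by lia.
have E : al C (g m) = sg2 C (g m.+1) by rewrite (al_g W R) //; lia.
have S1 : g 0 \in VV by rewrite Vg ?eqxx //; lia.
have S2 : al C (partner C p bb (g 0)) \notin VV by rewrite P1 E; apply: nV_sg2g; lia.
by rewrite (fol_in S1 S2) P1 E.
Qed.

Lemma A6 : al C' (sg2 C (g m.+1)) = sg2 C (g 1).
Proof.
case: partner_facts => _ P2 _ _.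
rewrite alC'; last by apply: nV_sg2g; lia.
rewrite (al_sg2g W R); last by lia.
have E : al C (g 0) = sg2 C (g 1) by rewrite (al_g W R) //; lia.
have S1 : g m \in VV by rewrite Vg ?eqxx ?orbT //; lia.
have S2 : al C (partner C p bb (g m)) \notin VV by rewrite P2 E; apply: nV_sg2g; lia.
by rewrite (fol_in S1 S2) P2 E.
Qed.

Definition g' k := if k < N - m.+1 then g (m.+1 + k)
  else if k < N - 2 then sg2 C (g (N - 2 - k)) else g m.+1.

Lemma g'_cases i : i < N - 2 ->
  (i < N - m.+1 /\ g' i = g (m.+1 + i)) \/ (N - m.+1 <= i /\ g' i = sg2 C (g (N - 2 - i))).
Proof.
move=> Hi; rewrite /g'; case: ifP => H; first by left.
by right; rewrite Hi; split => //; lia.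
Qed.

Lemma inD' d : (d \in darts C') = (d \notin VV) && (d \in darts C).
Proof. by rewrite /= in_setD. Qed.

Lemma tauC' d e : d \notin VV -> al C' d = e -> e \in darts C -> e \notin VV -> tau C' d = sg2 C e.
Proof.
move=> Hd Ha He HeV; rewrite /tau Ha sgC' // sgC' //.
by rewrite sgV.
Qed.

Lemma g'D i : i < N - 2 -> g' i \in darts C /\ g' i \notin VV.
Proof.
move=> Hi; case: (g'_cases Hi) => [[H ->]|[H ->]]; split.
- by apply: D; lia.
- by apply: nV_g; lia.
- by apply: D2; lia.
- by apply: nV_sg2g; lia.
Qed.

Lemma sg2C' d : d \in darts C -> d \notin VV -> sg2 C' d = sg2 C d.
Proof. by move=> Hd HV; rewrite /sg2 sgC' // sgC' // sgV. Qed.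

Lemma rep_C' : rep C' g' (N - 2).
Proof.
have HN := rep_pos R.
split.
- lia.
- rewrite /g'; have -> : (N - 2 < N - m.+1) = false by lia.
  rewrite ltnn; have -> : 0 < N - m.+1 by lia.
  by rewrite addn0.
- move=> k Hk.
  case: (g'_cases Hk) => [[H1 E1]|[H1 E1]].
  + have [H2|H2] : k.+1 < N - m.+1 \/ k.+1 = N - m.+1 by lia.
    * rewrite E1 (tauC' (e := sg2 C (g (m.+1 + k).+1))); first last.
      - by apply: nV_sg2g; lia.
      - by apply: D2; lia.
      - by apply: A1; lia.
      - by apply: nV_g; lia.
      rewrite (sg2K W); last by apply: D; lia.
      by rewrite /g' H2 addnS.
    * have Ek : m.+1 + k = N.-1 by lia.
      rewrite E1 Ek (tauC' (e := g m.-1)); first last.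
      - by apply: nV_g; lia.
      - by apply: D; lia.
      - exact: A3.
      - by apply: nV_g; lia.
      rewrite /g'; have -> : (k.+1 < N - m.+1) = false by lia.
      have -> : k.+1 < N - 2 by lia.
      congr (sg2 C (g _)); lia.
  + have [H2|H2] : k.+1 < N - 2 \/ k.+1 = N - 2 by lia.
    * rewrite E1 (tauC' (e := g (N - 2 - k).-1)); first last.
      - by apply: nV_g; lia.
      - by apply: D; lia.
      - by apply: A4; lia.
      - by apply: nV_sg2g; lia.
      rewrite /g'; have -> : (k.+1 < N - m.+1) = false by lia.
      rewrite H2; congr (sg2 C (g _)); lia.
    * have Ek : N - 2 - k = 1 by lia.
      rewrite E1 Ek (tauC' (e := sg2 C (g m.+1))); first last.
      - by apply: nV_sg2g; lia.
      - by apply: D2; lia.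
      - exact: A5.
      - by apply: nV_sg2g; lia.
      rewrite (sg2K W); last by apply: D; lia.
      rewrite /g' H2; have -> : (N - 2 < N - m.+1) = false by lia.
      by rewrite ltnn.
- move=> i j Hi Hj.
  case: (g'_cases Hi) => [[H1 ->]|[H1 ->]]; case: (g'_cases Hj) => [[H2 ->]|[H2 ->]].
  + move/(rep_inj R); lia.
  + move=> E; exfalso; apply: (rep_dis R _ _ E); lia.
  + move=> E; exfalso; apply: (rep_dis R _ _ (esym E)); lia.
  + move=> E; have := rep_inj R (i := N - 2 - i) (j := N - 2 - j) ltac:(lia) ltac:(lia)
      (sg2_inj W (@D (N - 2 - i) ltac:(lia)) (@D (N - 2 - j) ltac:(lia)) E); lia.
- move=> i j Hi Hj; case: (g'D Hj) => Dj Vj; rewrite sg2C' //.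
  case: (g'_cases Hi) => [[H1 ->]|[H1 ->]]; case: (g'_cases Hj) => [[H2 ->]|[H2 ->]].
  + apply: (rep_dis R); lia.
  + rewrite (sg2K W); last by apply: D; lia.
    move/(rep_inj R); lia.
  + move=> E; have := rep_inj R (i := N - 2 - i) (j := m.+1 + j) ltac:(lia) ltac:(lia)
      (sg2_inj W (@D (N - 2 - i) ltac:(lia)) (@D (m.+1 + j) ltac:(lia)) E); lia.
  + rewrite (sg2K W); last by apply: D; lia.
    move=> E; apply: (rep_dis R _ _ (esym E)); lia.
- move=> d; rewrite inD'; split.
  + case/andP=> HV Hd; case/(rep_cov R): (Hd) => j Hj Ej.
    have VJ : (d \in VV) = (j == 0) || (j == m) by case: Ej => ->; [apply: Vg|apply: Vsg2g].
    rewrite VJ negb_or in HV; case/andP: HV => Hj0 Hjm.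
    have [Hlt|Hgt] : j < m \/ m < j by lia.
    * exists (N - 2 - j); first by lia.
      have E : g' (N - 2 - j) = sg2 C (g j).
        rewrite /g'; have -> : (N - 2 - j < N - m.+1) = false by lia.
        have -> : N - 2 - j < N - 2 by lia.
        congr (sg2 C (g _)); lia.
      rewrite E; case: Ej => ->; [right|by left].
      rewrite sg2C'; first by rewrite (sg2K W) //; apply: D; lia.
      * by apply: D2; lia.
      * by apply: nV_sg2g; lia.
    * exists (j - m.+1); first by lia.
      have E : g' (j - m.+1) = g j.
        rewrite /g'; have -> : j - m.+1 < N - m.+1 by lia.
        congr g; lia.
      rewrite E; case: Ej => ->; [by left|right].
      rewrite sg2C' //; [by apply: D; lia|by apply: nV_g; lia].
  + move=> [i Hi E]; case: (g'D Hi) => Di Vi.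
    case: E => ->; first by rewrite Vi Di.
    rewrite sg2C' //.
    rewrite /sg2 sgV ?sgV ?sgD ?Vi //=; by rewrite !(sgD W).
Qed.

Lemma DC' d : d \in darts C' -> d \in darts C /\ d \notin VV.
Proof. by rewrite inD' => /andP []. Qed.

Lemma DC'_in d : d \in darts C -> d \notin VV -> d \in darts C'.
Proof. by move=> H1 H2; rewrite inD' H1 H2. Qed.

Lemma sg_out d : d \in darts C -> d \notin VV -> sg C d \in darts C /\ sg C d \notin VV.
Proof. by move=> H1 H2; rewrite sgD // sgV. Qed.

Lemma al_pair d : d \in darts C' -> exists2 e, e \in darts C' & al C' d = e /\ al C' e = d.
Proof.
move/DC' => [Hd HV]; case/(rep_cov R): (Hd) => j Hj Ej.
have VJ : (d \in VV) = (j == 0) || (j == m) by case: Ej => ->; [apply: Vg|apply: Vsg2g].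
rewrite VJ negb_or in HV; case/andP: HV => /eqP Hj0 /eqP Hjm.
case: Ej => ->.
- have [E1|[E1|E1]] : j.+1 = m \/ j.+1 = N \/ (j.+1 <> m /\ j.+1 <> N) by lia.
  + have -> : j = m.-1 by lia.
    exists (g N.-1); [apply: DC'_in; [apply: D|apply: nV_g]; lia| by rewrite A2 A3].
  + have -> : j = N.-1 by lia.
    exists (g m.-1); [apply: DC'_in; [apply: D|apply: nV_g]; lia| by rewrite A2 A3].
  + exists (sg2 C (g j.+1)); first by apply: DC'_in; [apply: D2|apply: nV_sg2g]; lia.
    rewrite A1; try lia; split => //.
    by rewrite A4 //; lia.
- have [E1|[E1|E1]] : j = 1 \/ j = m.+1 \/ (1 < j /\ j <> m.+1) by lia.
  + subst j; exists (sg2 C (g m.+1)); [apply: DC'_in; [apply: D2|apply: nV_sg2g]; lia| by rewrite A5 A6].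
  + subst j; exists (sg2 C (g 1)); [apply: DC'_in; [apply: D2|apply: nV_sg2g]; lia| by rewrite A5 A6].
  + exists (g j.-1); first by apply: DC'_in; [apply: D|apply: nV_g]; lia.
    rewrite A4; try lia; split => //.
    rewrite A1; try lia; congr (sg2 C (g _)); lia.
Qed.

Lemma wf_C' : wf C'.
Proof.
split.
- move=> d /DC' [Hd HV]; rewrite sgC' //; case: (sg_out Hd HV) => ??; exact: DC'_in.
- by move=> d /al_pair [e He [-> _]].
- move=> d /DC' [Hd HV].
  case: (sg_out Hd HV) => D1 V1; case: (sg_out D1 V1) => D2' V2; case: (sg_out D2' V2) => D3 V3.
  by rewrite !sgC' // (sg4 W).
- by move=> d /DC' [Hd HV]; rewrite sgC' //; apply: (sg1n W).
- move=> d /DC' [Hd HV]; rewrite sg2C' //; exact: (sg2n W).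
- by move=> d /al_pair [e He [-> ->]].
Qed.

End Smooth.

Theorem smooth_step T (C : curve T) g N m : wf C -> rep C g N -> 1 < m -> m.+1 < N ->
  same_vertex C (g m) (g 0) ->
  exists b, wf (smooth C (g 0) b) /\ rep (smooth C (g 0) b) (g' C g N m) (N - 2).
Proof.
move=> W R H1 H2 H3; exists (bb C g m); split; [exact: (wf_C' W R H1 H2 H3)|exact: (rep_C' W R H1 H2 H3)].
Qed.

Ltac slia := repeat (match goal with H : ?P |- _ => lazymatch P with
   | is_true (_ <= _) => fail | is_true (_ < _) => fail | @eq nat _ _ => fail
   | @eq bool _ _ => fail | ~ _ => fail | nat => fail | _ => clear H end end); lia.

Section Core.
Variable T : finType.

Lemma sv_smooth (C : curve T) p b e v : wf C ->
  e \in darts (smooth C p b) -> v \in darts (smooth C p b) ->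
  same_vertex C e v -> same_vertex (smooth C p b) e v.
Proof.
move=> W; rewrite /= !in_setD => /andP [Ve De] /andP [Vv Dv].
have sgV x : x \in darts C -> (sg C x \in vertex_set C p) = (x \in vertex_set C p).
  move=> Hx; rewrite !inE sgD // Hx /=; apply/idP/idP => H.
  - apply: (sv_trans H); apply: (sv_sym W); [exact: Hx|exact: (sv_sg W Hx)].
  - exact: (sv_trans H (sv_sg W Hx)).
have S1 : sg (smooth C p b) e = sg C e by rewrite /= (negbTE Ve).
have D1 := sgD W De.
have V1 : sg C e \notin vertex_set C p by rewrite sgV.
have S2 : sg (smooth C p b) (sg C e) = sg C (sg C e) by rewrite /= (negbTE V1).
have D2 := sgD W D1.
have V2 : sg C (sg C e) \notin vertex_set C p by rewrite sgV.
have S3 : sg (smooth C p b) (sg C (sg C e)) = sg C (sg C (sg C e)) by rewrite /= (negbTE V2).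
move/(sv_char W _ De) => [] ->.
- exact: connect0.
- by have := fconnect_iter (sg (smooth C p b)) 1 e; rewrite /= (negbTE Ve).
- by have := fconnect_iter (sg (smooth C p b)) 2 e; rewrite /= (negbTE Ve) (negbTE V1).
- by have := fconnect_iter (sg (smooth C p b)) 3 e; rewrite /= (negbTE Ve) (negbTE V1) (negbTE V2).
Qed.

Lemma rot_val (g : nat -> T) N s k r : (k + s) %% N = r -> rotg g N s k = g r.
Proof. by rewrite /rotg => ->. Qed.

Lemma core (C : curve T) g N c b : wf C -> rep C g N -> 2 <= c -> c + 2 <= b -> b + 2 <= N ->
  same_vertex C (g b) (g 0) -> same_vertex C (g c.+1) (g 1) -> same_vertex C (g b.+1) (g c) ->
  reductivity_le 2 C.
Proof.
move=> W R Hc Hcb HbN Sx Sy Sz.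
have HN1 : 1 < N by slia.
pose h := rotg g N 1.
have R1 : rep C h N by apply: rep_rot.
have hc : h c = g c.+1 by apply: rot_val; rewrite modn_small; slia.
have h0 : h 0 = g 1 by apply: rot_val; rewrite modn_small; slia.
have [b1 [W1 R1']] : exists b1, wf (smooth C (h 0) b1) /\ rep (smooth C (h 0) b1) (g' C h N c) (N - 2).
  apply: smooth_step => //; try slia; by rewrite hc h0.
set C1 := smooth C (h 0) b1 in W1 R1'.
set g1 := g' C h N c in R1'.
right; exists C1; split.
  by exists (h 0); [apply: (gD R1); slia|exists b1; split => //; exact: (rep_single W1 R1')].
pose s2 := b - c - 1.
pose h2 := rotg g1 (N - 2) s2.
have R2 : rep C1 h2 (N - 2) by apply: (rep_rot R1'); rewrite /s2; slia.
have hv k : k < N -> h k = g (if k.+1 < N then k.+1 else 0).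
  move=> Hk; apply: rot_val; rewrite mod_split; last by slia.
  case: ifP => H1; case: ifP => H2 //; slia.
have g1a k : k < N - c.+1 -> g1 k = h (c.+1 + k).
  by move=> Hk; rewrite /g1 /g' Hk.
have g1b k : N - c.+1 <= k -> k < N - 2 -> g1 k = sg2 C (h (N - 2 - k)).
  move=> H1 H2; rewrite /g1 /g' H2.
  by have -> : (k < N - c.+1) = false by slia.
have h2v k r : (k + s2) %% (N - 2) = r -> h2 k = g1 r by move=> H; apply: rot_val.
have E0 : h2 0 = g b.+1.
  rewrite (h2v 0 (b - c - 1)); last by rewrite /s2 modn_small; slia.
  rewrite g1a; last by slia.
  rewrite hv; last by slia.
  by congr g; case: ifP; slia.
have E1 : h2 (N - b) = sg2 C (g c).
  rewrite (h2v _ (N - c - 1)); last by rewrite /s2 modn_small; slia.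
  rewrite g1b; try slia.
  rewrite hv; last by slia.
  by congr (sg2 C (g _)); case: ifP; slia.
have D0 : h2 0 \in darts C1 by apply: (gD R2); slia.
have DNb : h2 (N - b) \in darts C1 by apply: (gD R2); slia.
have Sz1 : same_vertex C1 (h2 (N - b)) (h2 0).
  apply: (sv_smooth W) => //.
  rewrite E0 E1; apply: (sv_trans (e2 := g c)).
    apply: (sv_sym W); [apply: (gD R); slia|apply: (sv_sg2 W); apply: (gD R); slia].
  apply: (sv_sym W) => //; apply: (gD R); slia.
have [b2 [W2 R2']] : exists b2, wf (smooth C1 (h2 0) b2) /\ rep (smooth C1 (h2 0) b2) (g' C1 h2 (N - 2) (N - b)) (N - 2 - 2).
  by apply: smooth_step => //; slia.
set C2 := smooth C1 (h2 0) b2 in W2 R2'.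
set g2 := g' C1 h2 (N - 2) (N - b) in R2'.
right; exists C2; split.
  by exists (h2 0); [apply: (gD R2); slia|exists b2; split => //; exact: (rep_single W2 R2')].
have G4 : g2 (b - 4) = h2 (N - 3).
  rewrite /g2 /g'; have -> : b - 4 < N - 2 - (N - b).+1 by slia.
  congr h2; slia.
have G3 : g2 (b - 3) = sg2 C1 (h2 (N - b - 1)).
  rewrite /g2 /g'; have -> : (b - 3 < N - 2 - (N - b).+1) = false by slia.
  have -> : b - 3 < N - 2 - 2 by slia.
  congr (sg2 C1 (h2 _)); slia.
have H3 : h2 (N - 3) = g b.
  rewrite (h2v _ (b - c - 2)); last first.
    have -> : N - 3 + s2 = (b - c - 2) + (N - 2) by rewrite /s2; slia.
    rewrite modnDr modn_small; slia.
  rewrite g1a; last by slia.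
  rewrite hv; last by slia.
  by congr g; case: ifP; slia.
have Hb1 : h2 (N - b - 1) = g 0.
  rewrite (h2v _ (N - c - 2)); last by rewrite /s2 modn_small; slia.
  rewrite g1a; last by slia.
  rewrite hv; last by slia.
  by congr g; case: ifP; slia.
have Dx : g2 (b - 4) \in darts C2 by apply: (gD R2'); slia.
have Dx' : g2 (b - 3) \in darts C2 by apply: (gD R2'); slia.
have Sxx : same_vertex C2 (g2 (b - 3)) (g2 (b - 4)).
  apply: (sv_smooth W1) => //.
  rewrite G3 G4; apply: (sv_trans (e2 := h2 (N - b - 1))).
    apply: (sv_sym W1); [apply: (gD R2); slia|apply: (sv_sg2 W1); apply: (gD R2); slia].
  apply: (sv_smooth W); try (apply: (gD R2); slia).
  rewrite Hb1 H3; apply: (sv_sym W) => //; apply: (gD R); slia.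
exists (g2 (b - 4)); split => // y Hy.
have [c' [d' [Hc' Hd' Hcd' Sc Sd]]] := exists_two_pos W2 R2' Hy.
apply: (pair_not W2 R2' (a := b - 4) (b := b - 3) (c := c') (d := d')) => //; try slia.
- exact: sv_refl.
- rewrite /cross /ccw; slia.
Qed.

End Core.


Lemma key N t2 t3 xa ya yb zb zc xc :
  2 <= t2 -> t2.+1 < N -> 2 <= t3 -> t3.+1 < N -> t2 <> t3 -> t2 <> t3.+1 -> t2.+1 <> t3 ->
  ((xa = 0 /\ ya = 1) \/ (ya = 0 /\ xa = 1)) ->
  ((yb = t2 /\ zb = t2.+1) \/ (zb = t2 /\ yb = t2.+1)) ->
  ((zc = t3 /\ xc = t3.+1) \/ (xc = t3 /\ zc = t3.+1)) ->
  ~ cross xa xc ya yb -> ~ ~ cross ya yb zb zc -> ~ ~ cross zb zc xa xc ->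
  (xa = 0 /\ ya = 1 /\ zb = t2 /\ yb = t2.+1 /\ xc = t3 /\ zc = t3.+1 /\ t2 < t3) \/
  (ya = 0 /\ xa = 1 /\ yb = t2 /\ zb = t2.+1 /\ zc = t3 /\ xc = t3.+1 /\ t3 < t2).
Proof.
move=> ? ? ? ? ? ? ? H1 H2 H3 C1 C2 C3.
have [Ho|Ho] : t2 < t3 \/ t3 < t2 by lia.
all: split_all; move: C1 C2 C3; rewrite /cross /ccw; lia.
Qed.


Section Main.
Variable T : finType.
Variable C : curve T.
Hypothesis W : wf C.

Definition sgk k v := iter k (sg C) v.

Lemma sgkD k v : v \in darts C -> sgk k v \in darts C.
Proof. move=> Hv; elim: k => // k IH; rewrite /sgk iterS; exact: sgD. Qed.

Lemma sv_sgk k v : v \in darts C -> same_vertex C (sgk k v) v.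
Proof. move=> Hv; apply: (sv_sym W Hv); exact: fconnect_iter. Qed.

Lemma sgk_neq1 i j v : v \in darts C -> i < 4 -> j < 4 -> i != j -> sgk i v <> sgk j v.
Proof.
move=> Hv Hi Hj Hij.
have d01 := sg1n W Hv; have d02 := sg2n W Hv; have d03 := sg3n W Hv.
have d12 : sg C (sg C v) <> sg C v by move/(sg_inj W (sgD W Hv) Hv).
have d13 : sg C (sg C (sg C v)) <> sg C v by move/(sg_inj W (sgD W (sgD W Hv)) Hv).
have d23 : sg C (sg C (sg C v)) <> sg C (sg C v) by move/(sg_inj W (sgD W (sgD W Hv)) (sgD W Hv)).
case: i Hi Hij => [|[|[|[|i]]]] // _; case: j Hj => [|[|[|[|j]]]] //= _ _ E;
  first [exact: d01 E|exact: d02 E|exact: d03 E|exact: d12 E|exact: d13 E|exact: d23 E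
        |exact: d01 (esym E)|exact: d02 (esym E)|exact: d03 (esym E)|exact: d12 (esym E)
        |exact: d13 (esym E)|exact: d23 (esym E)].
Qed.

Lemma sgk_neq2 i j v w : v \in darts C -> w \in darts C -> ~~ same_vertex C v w -> sgk i v <> sgk j w.
Proof.
move=> Hv Hw nsv E; move/negP: nsv; apply.
apply: (sv_trans (e2 := sgk i v)); first by apply: fconnect_iter.
by rewrite E; apply: sv_sgk.
Qed.

Variable g : nat -> T.
Variable N : nat.
Hypothesis R : rep C g N.

Lemma edge_block d Q : d \in darts C -> sg C (al C d) = Q -> exists2 t, t < N &
  (g t = sgk 0 d /\ g t.+1 = sgk 1 Q) \/ (g t = sgk 3 Q /\ g t.+1 = sgk 2 d).
Proof.
move=> Hd HQ.
have Ha := alD W Hd.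
have E3 : sgk 3 Q = al C d by rewrite /sgk /= -HQ (sg4 W Ha).
have E1 : sgk 1 Q = tau C d by rewrite /tau /sgk /= -HQ.
case/(rep_cov R): (Hd) => i Hi [Ei|Ei].
- exists i => //; left; split => //.
  by rewrite E1 -(rep_tau R) // Ei.
- have [i' [Hi' Hi'N Ei']] : exists i', [/\ 0 < i', i' <= N & d = sg2 C (g i')].
    case: i Hi Ei => [|i] Hi Ei; first by exists N; rewrite (rep_per R); split => //; exact: (rep_pos R).
    by exists i.+1; split; [|apply: ltnW|].
  exists i'.-1; first by lia.
  right; rewrite E3 Ei' prednK //.
  have E' : g i' = g i'.-1.+1 by rewrite prednK.
  rewrite E' (al_sg2g W R); last by lia.
  split => //.
  rewrite /sgk /sg2 /= (sg4 W) //; apply: (gD R); lia.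
Qed.

Lemma pos_neq i j (A B A' B' : T) : (g i = A \/ g i = B) -> (g j = A' \/ g j = B') ->
  A <> A' -> A <> B' -> B <> A' -> B <> B' -> i <> j.
Proof.
move=> H1 H2 n1 n2 n3 n4 E; subst j; case: H1 => E1; case: H2 => E2; rewrite E1 in E2;
  [exact: n1 E2|exact: n2 E2|exact: n3 E2|exact: n4 E2].
Qed.

Lemma block_pos t P Q : P \in darts C -> Q \in darts C ->
  (g t = sgk 0 P /\ g t.+1 = sgk 1 Q) \/ (g t = sgk 3 Q /\ g t.+1 = sgk 2 P) ->
  exists pa qa, [/\ (pa = t /\ qa = t.+1) \/ (qa = t /\ pa = t.+1),
     same_vertex C (g pa) P & same_vertex C (g qa) Q].
Proof.
move=> HP HQ [[E1 E2]|[E1 E2]].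
- exists t, t.+1; split; first by left.
  + by rewrite E1; apply: sv_sgk.
  + by rewrite E2; apply: sv_sgk.
- exists t.+1, t; split; first by right.
  + by rewrite E2; apply: sv_sgk.
  + by rewrite E1; apply: sv_sgk.
Qed.

End Main.

Lemma sv_pair T (C : curve T) a b v : wf C -> a \in darts C -> same_vertex C a v -> same_vertex C b v ->
  b \in darts C -> same_vertex C a b.
Proof.
move=> W Ha Hav Hbv Hb; apply: (sv_trans Hav); apply: (sv_sym W Hb Hbv).
Qed.

Lemma nsv_sym T (C : curve T) v w : wf C -> w \in darts C -> ~~ same_vertex C v w -> ~~ same_vertex C w v.
Proof.
move=> W Hw H; apply/negP => H'; move/negP: H; apply.
exact: (sv_sym W).
Qed.

Lemma main_case T (C : curve T) g N f : wf C -> rep C g N -> f \in darts C ->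
  phi C (phi C (phi C f)) = f ->
  ~~ same_vertex C f (phi C f) -> ~~ same_vertex C (phi C f) (phi C (phi C f)) ->
  ~~ same_vertex C (phi C (phi C f)) f ->
  ~ interlaced C f (phi C f) -> interlaced C (phi C f) (phi C (phi C f)) ->
  interlaced C (phi C (phi C f)) f -> reductivity_le 2 C.
Proof.
move=> W R Hf Hphi.
set y := phi C f; set z := phi C y.
move=> nxy nyz nzx Ixy Iyz Izx.
have Hy : y \in darts C by rewrite /y /phi (sgD W) // (alD W).
have Hz : z \in darts C by rewrite /z /phi (sgD W) // (alD W).
have nyx := nsv_sym W Hy nxy; have nzy := nsv_sym W Hz nyz; have nxz := nsv_sym W Hf nzx.
have [t1 Ht1 B1] := edge_block W R Hf (erefl y).
pose h := rotg g N t1.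
have Rh : rep C h N by apply: rep_rot.
have HN := rep_pos R.
have h0 : h 0 = g t1 by rewrite /h /rotg add0n modn_small.
have h1 : h 1 = g t1.+1.
  rewrite /h /rotg add1n; have [E|E] : t1.+1 < N \/ t1.+1 = N by lia.
  - by rewrite modn_small.
  - by rewrite E modnn (rep_per R).
have B1h : (h 0 = sgk C 0 f /\ h 1 = sgk C 1 y) \/ (h 0 = sgk C 3 y /\ h 1 = sgk C 2 f).
  by rewrite h0 h1.
have [t2 Ht2 B2] := edge_block W Rh Hy (erefl z).
have [t3 Ht3 B3] := edge_block W Rh Hz Hphi.
have hN : h N = h 0 := rep_per Rh.
Ltac dneq := first [ by apply: sgk_neq1 | by apply: sgk_neq2 ].
have P0 : forall k, h k = h 0 -> (h k = sgk C 0 f \/ h k = sgk C 3 y).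
  by move=> k ->; case: B1h => [[-> _]|[-> _]]; [left|right].
have P1 : (h 1 = sgk C 1 y \/ h 1 = sgk C 2 f) by case: B1h => [[_ ->]|[_ ->]]; [left|right].
have Q2a : (h t2 = sgk C 0 y \/ h t2 = sgk C 3 z) by case: B2 => [[-> _]|[-> _]]; [left|right].
have Q2b : (h t2.+1 = sgk C 1 z \/ h t2.+1 = sgk C 2 y) by case: B2 => [[_ ->]|[_ ->]]; [left|right].
have Q3a : (h t3 = sgk C 0 z \/ h t3 = sgk C 3 f) by case: B3 => [[-> _]|[-> _]]; [left|right].
have Q3b : (h t3.+1 = sgk C 1 f \/ h t3.+1 = sgk C 2 z) by case: B3 => [[_ ->]|[_ ->]]; [left|right].
have n20 : t2 <> 0 by apply: (pos_neq Q2a (P0 0 erefl)); dneq.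
have n21 : t2 <> 1 by apply: (pos_neq Q2a P1); dneq.
have n2N : t2.+1 <> N by apply: (pos_neq Q2b (P0 N hN)); dneq.
have n30 : t3 <> 0 by apply: (pos_neq Q3a (P0 0 erefl)); dneq.
have n31 : t3 <> 1 by apply: (pos_neq Q3a P1); dneq.
have n3N : t3.+1 <> N by apply: (pos_neq Q3b (P0 N hN)); dneq.
have n23 : t2 <> t3 by apply: (pos_neq Q2a Q3a); dneq.
have n23' : t2 <> t3.+1 by apply: (pos_neq Q2a Q3b); dneq.
have n32' : t2.+1 <> t3 by apply: (pos_neq Q2b Q3a); dneq.
have [xa [ya [Oa Sxa Sya]]] := block_pos W Hf Hy B1h.
have [yb [zb [Ob Syb Szb]]] := block_pos W Hy Hz B2.
have [zc [xc [Oc Szc Sxc]]] := block_pos W Hz Hf B3.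
have Ht2' : 2 <= t2 by slia.
have Ht2'' : t2.+1 < N by slia.
have Ht3' : 2 <= t3 by slia.
have Ht3'' : t3.+1 < N by slia.
have Hxa : xa < N by case: Oa => [[-> _]|[_ ->]]; slia.
have Hya : ya < N by case: Oa => [[_ ->]|[-> _]]; slia.
have Hyb : yb < N by case: Ob => [[-> _]|[_ ->]]; slia.
have Hzb : zb < N by case: Ob => [[_ ->]|[-> _]]; slia.
have Hzc : zc < N by case: Oc => [[-> _]|[_ ->]]; slia.
have Hxc : xc < N by case: Oc => [[_ ->]|[-> _]]; slia.
have Nxy : ~ cross xa xc ya yb.
  move=> Hc; apply: Ixy; apply: (pair_yes W Rh (a := xa) (b := xc) (c := ya) (d := yb)) => //;
  move: Oa Ob Oc Ht2' Ht2'' Ht3' Ht3'' n23 n23' n32'; clear; lia.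
have Cyz : ~ ~ cross ya yb zb zc.
  move=> Hc; apply: (pair_not W Rh (a := ya) (b := yb) (c := zb) (d := zc)) Iyz => //;
  move: Oa Ob Oc Ht2' Ht2'' Ht3' Ht3'' n23 n23' n32'; clear; lia.
have Czx : ~ ~ cross zb zc xa xc.
  move=> Hc; apply: (pair_not W Rh (a := zb) (b := zc) (c := xa) (d := xc)) Izx => //;
  move: Oa Ob Oc Ht2' Ht2'' Ht3' Ht3'' n23 n23' n32'; clear; lia.
have Dh k : k < N -> h k \in darts C by move=> Hk; apply: (gD Rh); apply: ltnW.
case: (key Ht2' Ht2'' Ht3' Ht3'' n23 n23' n32' Oa Ob Oc Nxy Cyz Czx) => 
  [[? [? [? [? [? [? ?]]]]]]|[? [? [? [? [? [? ?]]]]]]]; subst.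
- apply: (core W Rh (c := t2) (b := t3)); try slia.
  + exact: (sv_pair W (Dh _ Hxc) Sxc Sxa (Dh _ Hxa)).
  + exact: (sv_pair W (Dh _ Hyb) Syb Sya (Dh _ Hya)).
  + exact: (sv_pair W (Dh _ Hzc) Szc Szb (Dh _ Hzb)).
- apply: (core W Rh (c := t3) (b := t2)); try slia.
  + exact: (sv_pair W (Dh _ Hyb) Syb Sya (Dh _ Hya)).
  + exact: (sv_pair W (Dh _ Hxc) Sxc Sxa (Dh _ Hxa)).
  + exact: (sv_pair W (Dh _ Hzb) Szb Szc (Dh _ Hzc)).
Qed.

Theorem mainTheorem4 (T : finType) (P : curve T) :
  is_spherical_curve P -> trigon_typeA P -> reductivity_le 2 P.
Proof.
move=> S [f Hf [[Hphi _ nxy nyz nzx] Hex]].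
have W := sph_wf S; have [g [N R]] := sph_rep S.
have Hy : phi P f \in darts P by rewrite /phi (sgD W) // (alD W).
have Hz : phi P (phi P f) \in darts P by rewrite /phi (sgD W) // (alD W) // -/(phi P f).
case: Hex => [[Ixy Iyz Izx]|[Ixy Iyz Izx]|[Ixy Iyz Izx]].
- apply: (main_case W R (f := phi P (phi P f))) => //; rewrite ?Hphi //.
- apply: (main_case W R (f := phi P f)) => //; rewrite ?Hphi //.
- exact: (main_case W R Hf Hphi).
Qed.
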